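(* Let ${\bm{x}}_i^m\in\mathbb{R}^d$ ($m\in[M]$, $i\in[n]$) satisfy $\|{\bm{x}}_i^m\|\le1$ and be linearly separable with maximum margin $\gamma=\max_{\|{\bm{w}}\|=1}\min_{m,i}\langle{\bm{w}},{\bm{x}}_i^m\rangle>0$. Let $\ell(z)=\log(1+e^{-z})$, $F_m({\bm{w}})=\frac1n\sum_i\ell(\langle{\bm{w}},{\bm{x}}_i^m\rangle)$, $F=\frac1M\sum_mF_m$. Run Local GD with any ${\bm{w}}_0$, $\eta>0$, $K\in\mathbb{N}$: ${\bm{w}}_{r,0}^m={\bm{w}}_r$, ${\bm{w}}_{r,k+1}^m={\bm{w}}_{r,k}^m-\eta\nabla F_m({\bm{w}}_{r,k}^m)$ ($k=0,\dots,K-1$), ${\bm{w}}_{r+1}=\frac1M\sum_m{\bm{w}}_{r,K}^m$. Define $${\bm{b}}_r=\frac1{MK}\sum_{m=1}^M\sum_{k=0}^{K-1}\big(\nabla F_m({\bm{w}}_{r,k}^m)-\nabla F_m({\bm{w}}_r)\big).$$ If $F({\bm{w}}_r)\le\gamma/(70\eta KM)$, then $\|{\bm{b}}_r\|\le\frac15\|\nabla F({\bm{w}}_r)\|$.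
   Context: Linear separability means there is ${\bm{w}}$ with $\langle{\bm{w}},{\bm{x}}_i^m\rangle>0$ for all $m,i$ (labels absorbed into data). Note ${\bm{w}}_{r+1}-{\bm{w}}_r=-\eta K(\nabla F({\bm{w}}_r)+{\bm{b}}_r)$. *)

(* Defs.v *)
From HB Require Import structures.
From mathcomp Require Import all_boot all_order all_algebra.
From mathcomp Require Import all_classical all_reals all_analysis.
Set Implicit Arguments. Unset Strict Implicit. Unset Printing Implicit Defensive.
Import Order.TTheory GRing.Theory Num.Theory.
Import numFieldNormedType.Exports.
Local Open Scope ring_scope.

Section Defs.
Variable R : realType.
Variable d : nat.
Notation vec := 'rV[R]_d.

Definition dotv (u v : vec) : R := \sum_(j < d) u 0 j * v 0 j.
Definition enorm (u : vec) : R := Num.sqrt (dotv u u).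

Definition grad (f : vec -> R) (w : vec) : vec :=
  \row_(j < d) derive f w (delta_mx 0 j : vec).

Definition logistic (z : R) : R := ln (1 + expR (- z)).

Definition Floc (n : nat) (xs : 'I_n -> vec) (w : vec) : R :=
  n%:R^-1 * \sum_(i < n) logistic (dotv w (xs i)).

Definition Fglob (M n : nat) (x : 'I_M -> 'I_n -> vec) (w : vec) : R :=
  M%:R^-1 * \sum_(m < M) Floc (x m) w.

Definition local_iter (n : nat) (xs : 'I_n -> vec) (eta : R) (k : nat) (w : vec)
  : vec := iter k (fun v => v - eta *: grad (Floc xs) v) w.

Definition round (M n : nat) (x : 'I_M -> 'I_n -> vec) (eta : R) (K : nat)
  (w : vec) : vec :=
  M%:R^-1 *: \sum_(m < M) local_iter (x m) eta K w.

Definition localGD (M n : nat) (x : 'I_M -> 'I_n -> vec) (eta : R) (K : nat)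
  (w0 : vec) (r : nat) : vec := iter r (round x eta K) w0.

Definition bias (M n : nat) (x : 'I_M -> 'I_n -> vec) (eta : R) (K : nat)
  (w0 : vec) (r : nat) : vec :=
  (M%:R * K%:R)^-1 *:
    \sum_(m < M) \sum_(k < K)
      (grad (Floc (x m)) (local_iter (x m) eta k (localGD x eta K w0 r))
       - grad (Floc (x m)) (localGD x eta K w0 r)).

Definition is_max_margin (M n : nat) (x : 'I_M -> 'I_n -> vec) (gamma : R) :=
  (exists w : vec, enorm w = 1 /\ forall m i, gamma <= dotv w (x m i)) /\
  (forall w : vec, enorm w = 1 -> exists m i, dotv w (x m i) <= gamma).

End Defs.

(* Main.v *)
Require Import Defs.
From HB Require Import structures.
From mathcomp Require Import all_boot all_order all_algebra.
From mathcomp Require Import all_classical all_reals all_analysis.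
From mathcomp Require Import ring lra.
Import Order.TTheory GRing.Theory Num.Theory.
Import numFieldNormedType.Exports.
Local Open Scope ring_scope.
Definition sg {R : realType} (z : R) := (1 + expR z)^-1.
Section S0.
Variable R : realType.
Lemma sg_gt0 (z : R) : 0 < sg z.
Proof. by rewrite /sg invr_gt0; have := expR_gt0 z; lra. Qed.
Lemma logistic_ge0 (z : R) : 0 <= logistic z.
Proof. by rewrite /logistic ln_ge0 // lerDl expR_ge0. Qed.
Lemma logistic_ge_sg (z : R) : sg z <= logistic z.
Proof.
rewrite /logistic /sg.
set u := expR (- z).
have up : 0 < u by apply: expR_gt0.
have eu : expR z = u^-1 by rewrite /u expRN invrK.
have h1 : -1 < - (u / (1 + u)).
  rewrite ltrN2 ltr_pdivrMr; lra.
have := le_ln1Dx h1.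
have -> : 1 - u / (1 + u) = (1 + u)^-1 by field; lra.
rewrite lnV ?posrE; last lra.
rewrite lerN2 eu => H; apply: le_trans H; rewrite le_eqVlt; apply/orP; left; apply/eqP.
field; apply/andP; split; apply: lt0r_neq0; lra.
Qed.
Lemma expm1_bound (t : R) : `|t| <= 2^-1 -> `|expR t - 1| <= 2 * `|t|.
Proof.
move=> ht.
have E0 := expR_gt0 t.
have E1 := expR_ge1Dx t.
have F1 := expR_ge1Dx (- t).
have EF : expR t * expR (- t) = 1 by rewrite -expRD subrr expR0.
set E := expR t in E0 E1 EF *; set F := expR (- t) in F1 EF *.
have [t0|t0] := lerP 0 t.
  rewrite (ger0_norm t0) ger0_norm; last lra.
  have : E * (1 - t) <= 1 by nra.
  move: ht; rewrite (ger0_norm t0) => ht; nra.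
rewrite (ltr0_norm t0) ler0_norm; last first.
  have : E * (1 - t) <= 1 by nra.
  nra.
lra.
Qed.
Lemma sg_diff (a b : R) : `|a - b| <= 2^-1 ->
  `|sg a - sg b| <= 2 * `|a - b| * sg b.
Proof.
move=> h.
have ea := expR_gt0 a.
have eb : expR b = expR a * expR (b - a) by rewrite -expRD addrC subrK.
have id : sg a - sg b = (expR a / (1 + expR a)) * (expR (b - a) - 1) * sg b.
  rewrite /sg eb; have := expR_gt0 (b - a); move=> ed.
  field; apply/andP; split; apply: lt0r_neq0; nra.
have q0 : 0 <= expR a / (1 + expR a) by apply: divr_ge0; lra.
rewrite id; set q := expR a / (1 + expR a) in q0 *.
rewrite normrM (normrM q) (gtr0_norm (sg_gt0 b)) (ger0_norm q0).
rewrite ler_pM2r ?sg_gt0 //.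
have h2 : q <= 1 by rewrite /q ler_pdivrMr; lra.
have := @expm1_bound (b - a); rewrite distrC => /(_ h) H.
apply: le_trans H; rewrite ler_piMl //.
Qed.
Lemma sg_le2 (a b : R) : `|a - b| <= 2^-1 -> sg a <= 2 * sg b.
Proof.
move=> h; have := @sg_diff a b h; have := sg_gt0 b; rewrite ler_norml => hb /andP[_ H2].
have : 2 * `|a - b| * sg b <= sg b by rewrite -mulrA; nra.
lra.
Qed.
End S0.
Section S.
Variable R : realType.
Variable d : nat.
Notation vec := 'rV[R]_d.
Lemma dotvDl (u v x : vec) : dotv (u + v) x = dotv u x + dotv v x.
Proof. by rewrite /dotv -big_split; apply: eq_bigr => j _; rewrite mxE mulrDl. Qed.
Lemma dotvZl (a : R) (u x : vec) : dotv (a *: u) x = a * dotv u x.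
Proof. by rewrite /dotv mulr_sumr; apply: eq_bigr => j _; rewrite mxE mulrA. Qed.
Lemma dotvNl (u x : vec) : dotv (- u) x = - dotv u x.
Proof. by rewrite -scaleN1r dotvZl mulN1r. Qed.
Lemma dotvBl (u v x : vec) : dotv (u - v) x = dotv u x - dotv v x.
Proof. by rewrite dotvDl dotvNl. Qed.
Lemma dotvC (u v : vec) : dotv u v = dotv v u.
Proof. by rewrite /dotv; apply: eq_bigr => j _; rewrite mulrC. Qed.
Lemma dotvDr (u v x : vec) : dotv x (u + v) = dotv x u + dotv x v.
Proof. by rewrite dotvC dotvDl !(dotvC x). Qed.
Lemma dotvZr (a : R) (u x : vec) : dotv x (a *: u) = a * dotv x u.
Proof. by rewrite dotvC dotvZl dotvC. Qed.
Lemma dotvNr (u x : vec) : dotv x (- u) = - dotv x u.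
Proof. by rewrite dotvC dotvNl dotvC. Qed.
Lemma dotv_suml I (s : seq I) (P : pred I) (F : I -> vec) x :
  dotv (\sum_(i <- s | P i) F i) x = \sum_(i <- s | P i) dotv (F i) x.
Proof.
elim/big_rec2: _ => [|i y1 y2 _ <-]; last by rewrite dotvDl.
by rewrite /dotv big1 // => j _; rewrite mxE mul0r.
Qed.
Lemma dotvv_ge0 (u : vec) : 0 <= dotv u u.
Proof. by apply: sumr_ge0 => j _; rewrite -expr2 sqr_ge0. Qed.
Lemma enorm_ge0 (u : vec) : 0 <= enorm u.
Proof. exact: sqrtr_ge0. Qed.
Lemma enorm_sq (u : vec) : enorm u ^+ 2 = dotv u u.
Proof. by rewrite /enorm sqr_sqrtr // dotvv_ge0. Qed.
Lemma dotvv_ge0_aux (u : vec) k : 0 <= u 0 k * u 0 k.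
Proof. by rewrite -expr2 sqr_ge0. Qed.
Lemma dotv_eq0 (u v : vec) : enorm u = 0 -> dotv u v = 0.
Proof.
move=> h; have : dotv u u = 0 by rewrite -enorm_sq h expr0n.
move/psumr_eq0P => H.
have {}H := H (fun k _ => dotvv_ge0_aux u k).
rewrite /dotv big1 // => j _.
by have /eqP := H j isT; rewrite mulf_eq0 orbb => /eqP ->; rewrite mul0r.
Qed.
Lemma CS (u v : vec) : dotv u v <= enorm u * enorm v.
Proof.
have [A0|A0] := eqVneq (enorm u) 0; first by rewrite dotv_eq0 // A0 mul0r.
have [B0|B0] := eqVneq (enorm v) 0; first by rewrite dotvC dotv_eq0 // B0 mulr0.
have Ap : 0 < enorm u by rewrite lt_def A0 enorm_ge0.
have Bp : 0 < enorm v by rewrite lt_def B0 enorm_ge0.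
have := dotvv_ge0 (enorm v *: u - enorm u *: v).
rewrite !(dotvDl, dotvDr, dotvNl, dotvNr, dotvZl, dotvZr) -!enorm_sq (dotvC v u).
set A := enorm u; set B := enorm v; set c := dotv u v => H.
have P : 0 < A * B by apply: mulr_gt0.
have H2 : 0 <= (A * B) * (A * B - c) by nra.
rewrite -subr_ge0; move: H2; rewrite pmulr_rge0 //.
Qed.
Lemma enormN (u : vec) : enorm (- u) = enorm u.
Proof. by rewrite /enorm dotvNl dotvNr opprK. Qed.
Lemma CSabs (u v : vec) : `|dotv u v| <= enorm u * enorm v.
Proof.
rewrite ler_norml CS andbT lerNl -dotvNl -(enormN u); exact: CS.
Qed.
Lemma enormZ (a : R) (u : vec) : enorm (a *: u) = `|a| * enorm u.
Proof.
by rewrite /enorm dotvZl dotvZr mulrA -expr2 sqrtrM ?sqr_ge0 // sqrtr_sqr.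
Qed.
Lemma enormD (u v : vec) : enorm (u + v) <= enorm u + enorm v.
Proof.
rewrite {1}/enorm -(ger0_norm (addr_ge0 (enorm_ge0 u) (enorm_ge0 v))) -sqrtr_sqr.
apply: ler_wsqrtr.
rewrite !(dotvDl, dotvDr) (dotvC v u) sqrrD -!enorm_sq.
have := CS u v; lra.
Qed.
Lemma enorm_sum I (s : seq I) (P : pred I) (F : I -> vec) :
  enorm (\sum_(i <- s | P i) F i) <= \sum_(i <- s | P i) enorm (F i).
Proof.
elim/big_rec2: _ => [|i y1 y2 _ H].
  by rewrite /enorm /dotv big1 ?sqrtr0 // => j _; rewrite mxE mul0r.
by apply: le_trans (enormD _ _) _; rewrite lerD2l.
Qed.
Lemma deriveE1 (f : vec -> R) x v :
  derive f x v = derive (fun h : R => f (h *: v + x)) 0 1.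
Proof.
rewrite /derive; set g1 := fun h => h^-1 *: _; set g2 := fun h => h^-1 *: _.
suff -> : g1 = g2 by [].
by rewrite funeqE /g1 /g2 => h /=; rewrite addr0 scale0r add0r [_%:A]mulr1.
Qed.
Lemma is_derive1P (f : vec -> R) x v df :
  is_derive (0:R) 1 (fun h : R => f (h *: v + x)) df -> is_derive x v f df.
Proof.
move=> [H1 H2]; split; first exact/derivable1P.
by rewrite deriveE1.
Qed.






Lemma dotv_delta j (x : vec) : dotv (delta_mx 0 j) x = x 0 j.
Proof.
rewrite /dotv (bigD1 j) //= big1 ?addr0; first by rewrite mxE !eqxx mul1r.
by move=> k /negbTE kj; rewrite mxE kj andbF mul0r.
Qed.

Lemma aff (x a c : R) : is_derive x 1 (fun h : R => h * a + c) a.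
Proof.
have -> : (fun h : R => h * a + c) = (a \*: (@id R)) + cst c.
  by apply/funext => h /=; rewrite mulrC.
apply: is_derive_eq.
by rewrite /= addr0 scaler1.
Qed.
Lemma dlog (c : R) : is_derive c 1 (@logistic R) (- sg c).
Proof.
rewrite /logistic.
have -> : (fun z => ln (1 + expR (- z))) = (@ln R) \o (fun z => 1 + expR (- z)) by [].
apply: is_derive_eq.
apply: is_derive1_comp.
  apply: is_derive1_ln.
  by rewrite ltr_pwDl // expR_ge0.
rewrite /sg expRN add0r mul1r mulrN1 mulrN; congr (- _).
have h : 0 < expR c by rewrite expR_gt0.
field; apply/andP; split; rewrite gt_eqF //; lra.
Qed.
Lemma is_derive_term (xi w : vec) j :
  is_derive w (delta_mx 0 j) (fun v => logistic (dotv v xi)) (- sg (dotv w xi) * xi 0 j).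
Proof.
apply: is_derive1P.
have -> : (fun h : R => logistic (dotv (h *: delta_mx 0 j + w) xi))
   = (@logistic R) \o (fun h => h * xi 0 j + dotv w xi).
  by apply/funext => h /=; rewrite dotvDl dotvZl dotv_delta.

apply: is_derive1_comp; last exact: aff.
rewrite /= mul0r add0r; exact: dlog.
Qed.
Definition gl n (xs : 'I_n -> vec) (v : vec) : vec :=
  - (n%:R^-1 *: \sum_(i < n) sg (dotv v (xs i)) *: xs i).
Arguments gl {n}.
Lemma is_derive_Floc n (xs : 'I_n -> vec) w j :
  is_derive w (delta_mx 0 j) (Floc xs) (gl xs w 0 j).
Proof.
have -> : Floc xs = n%:R^-1 \*: \sum_(i < n) (fun v => logistic (dotv v (xs i))).
  apply/funext => v; rewrite /Floc /=; congr (_ * _).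
  by rewrite fct_sumE.
apply: is_derive_eq.
  apply: is_deriveZ; apply: is_derive_sum => i; exact: is_derive_term.
rewrite /gl !mxE summxE mulr_sumr -sumrN scaler_sumr.
apply: eq_bigr => i _; rewrite !mxE.
by rewrite mulNr; apply: mulrN.
Qed.

Lemma grad_Floc n (xs : 'I_n -> vec) w : grad (Floc xs) w = gl xs w.
Proof.
apply/rowP => j; rewrite mxE.
by have [_ ->] := is_derive_Floc _ xs w j.
Qed.
Lemma grad_Fglob M n (x : 'I_M -> 'I_n -> vec) w :
  grad (Fglob x) w = M%:R^-1 *: \sum_(m < M) gl (x m) w.
Proof.
apply/rowP => j; rewrite mxE.
have -> : Fglob x = M%:R^-1 \*: \sum_(m < M) Floc (x m).
  apply/funext => v; rewrite /Fglob /=; congr (_ * _).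
  by rewrite fct_sumE.
have H : is_derive w (delta_mx 0 j) (M%:R^-1 \*: \sum_(m < M) Floc (x m))
   (M%:R^-1 *: \sum_(m < M) gl (x m) w 0 j).
  apply: is_deriveZ; apply: is_derive_sum => m; exact: is_derive_Floc.
have [_ ->] := H.
by rewrite !mxE summxE.
Qed.
Definition Gl n (xs : 'I_n -> vec) (w : vec) : R :=
  n%:R^-1 * \sum_(i < n) sg (dotv w (xs i)).
Arguments Gl {n}.
Lemma Gl_ge0 n (xs : 'I_n -> vec) w : 0 <= Gl xs w.
Proof.
by apply: mulr_ge0; [rewrite invr_ge0 ler0n|apply: sumr_ge0 => i _; apply/ltW/sg_gt0].
Qed.
Lemma enorm0 : enorm (0 : vec) = 0.
Proof. by rewrite /enorm /dotv big1 ?sqrtr0 // => j _; rewrite mxE mul0r. Qed.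
Lemma dot_close (v w xi : vec) : enorm xi <= 1 ->
  `|dotv v xi - dotv w xi| <= enorm (v - w).
Proof.
move=> hx; rewrite -dotvBl; apply: le_trans (CSabs _ _) _.
by rewrite ler_piMr // enorm_ge0.
Qed.
Lemma enorm_gl_le n (xs : 'I_n -> vec) v w :
  (forall i, enorm (xs i) <= 1) -> enorm (v - w) <= 2^-1 ->
  enorm (gl xs v) <= 2 * Gl xs w.
Proof.
move=> hx hv; rewrite /gl enormN enormZ ger0_norm ?invr_ge0 ?ler0n //.
rewrite /Gl mulrCA ler_wpM2l ?invr_ge0 ?ler0n //.
apply: le_trans (enorm_sum _ _ _ _) _.
rewrite mulr_sumr; apply: ler_sum => i _.
rewrite enormZ ger0_norm; last exact/ltW/sg_gt0.
apply: le_trans (_ : sg (dotv v (xs i)) <= _).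
  by rewrite ler_piMr // ltW // sg_gt0.
apply: sg_le2; apply: le_trans (dot_close v w _ (hx i)) hv.
Qed.
Lemma enorm_gl_diff n (xs : 'I_n -> vec) v w :
  (forall i, enorm (xs i) <= 1) -> enorm (v - w) <= 2^-1 ->
  enorm (gl xs v - gl xs w) <= 2 * enorm (v - w) * Gl xs w.
Proof.
move=> hx hv.
have -> : gl xs v - gl xs w =
   - (n%:R^-1 *: \sum_(i < n) (sg (dotv v (xs i)) - sg (dotv w (xs i))) *: xs i).
  rewrite /gl opprK addrC -opprB -scalerBr -sumrB; congr (- (_ *: _)).
  by apply: eq_bigr => i _; rewrite scalerBl.
rewrite enormN enormZ ger0_norm ?invr_ge0 ?ler0n //.
rewrite /Gl mulrCA ler_wpM2l ?invr_ge0 ?ler0n //.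
apply: le_trans (enorm_sum _ _ _ _) _.
rewrite mulr_sumr; apply: ler_sum => i _.
rewrite enormZ.
have h1 := dot_close v w _ (hx i).
apply: le_trans (_ : `|sg (dotv v (xs i)) - sg (dotv w (xs i))| <= _).
  by rewrite ler_piMr // hx.
apply: le_trans (sg_diff _ _ _ (le_trans h1 hv)) _.
rewrite ler_wpM2r ?ler_wpM2l //; last exact/ltW/sg_gt0.
Qed.
Lemma local_iterS n (xs : 'I_n -> vec) eta k w :
  local_iter xs eta k.+1 w = local_iter xs eta k w - eta *: gl xs (local_iter xs eta k w).
Proof. by rewrite /local_iter iterS -/(local_iter xs eta k w) grad_Floc. Qed.
Lemma traj n (xs : 'I_n -> vec) (eta : R) w (K : nat) :
  0 < eta -> (forall i, enorm (xs i) <= 1) ->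
  2 * K%:R * (eta * Gl xs w) <= 2^-1 ->
  forall k, (k <= K)%N ->
  enorm (local_iter xs eta k w - w) <= 2 * k%:R * (eta * Gl xs w).
Proof.
move=> he hx hB; elim => [_|k IH hk].
  by rewrite /local_iter /= subrr enorm0 mulr0 mul0r.
have hk' : (k <= K)%N by apply: ltnW.
have {}IH := IH hk'.
have c0 : 0 <= eta * Gl xs w by apply: mulr_ge0; [exact: ltW|exact: Gl_ge0].
have hD : enorm (local_iter xs eta k w - w) <= 2^-1.
  apply: le_trans IH _; apply: le_trans hB.
  by rewrite ler_wpM2r // ler_wpM2l // ler_nat.
rewrite local_iterS addrAC.
apply: le_trans (enormD _ _) _.
rewrite enormN enormZ gtr0_norm //.
have := enorm_gl_le _ _ _ _ hx hD.
rewrite -natr1; move: IH; set D := enorm _; set G := Gl xs w.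
move=> IH hg; have : eta * enorm (gl xs (local_iter xs eta k w)) <= eta * (2 * G).
  by rewrite ler_wpM2l // ltW.
nra.
Qed.
End S.
Lemma sum_const_ord (R : realType) (K : nat) (c : R) : \sum_(k < K) c = K%:R * c.
Proof. by rewrite sumr_const card_ord mulr_natl. Qed.
Arguments Gl {R d n}.
Arguments gl {R d n}.

Theorem lemma4p8 (R : realType) (d M n : nat) (x : 'I_M -> 'I_n -> 'rV[R]_d)
  (gamma eta : R) (K : nat) (w0 : 'rV[R]_d) (r : nat) :
  (0 < M)%N -> (0 < n)%N -> (0 < K)%N ->
  (forall m i, enorm (x m i) <= 1) ->
  is_max_margin x gamma -> 0 < gamma ->
  0 < eta ->
  Fglob x (localGD x eta K w0 r) <= gamma / (70 * eta * K%:R * M%:R) ->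
  enorm (bias x eta K w0 r) <= 5^-1 * enorm (grad (Fglob x) (localGD x eta K w0 r)).
Proof.
move=> M0 n0 K0 hx [[ws [ws1 hws]] _] g0 e0 hF.
set w := localGD x eta K w0 r in hF *.
have Mp : 0 < M%:R :> R by rewrite ltr0n.
have Kp : 0 < K%:R :> R by rewrite ltr0n.
have g1 : gamma <= 1.
  have h := hws (Ordinal M0) (Ordinal n0).
  apply: le_trans h _; apply: le_trans (CS _ _ _ _) _.
  by rewrite ws1 mul1r hx.
set G := fun m => Gl (x m) w.
have G0 : forall m, 0 <= G m by move=> m; exact: Gl_ge0.
have Fl0 : forall m, 0 <= Floc (x m) w.
  move=> m; apply: mulr_ge0; first by rewrite invr_ge0 ler0n.
  by apply: sumr_ge0 => i _; exact: logistic_ge0.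
have GF : forall m, G m <= Floc (x m) w.
  move=> m; rewrite /G /Gl /Floc ler_wpM2l ?invr_ge0 ?ler0n //.
  by apply: ler_sum => i _; exact: logistic_ge_sg.
have FM : forall m, Floc (x m) w <= M%:R * Fglob x w.
  move=> m; rewrite /Fglob mulrA mulfV ?gt_eqF // mul1r.
  by rewrite (bigD1 m) //= lerDl; apply: sumr_ge0 => ? _; exact: Fl0.
have Gc : forall m, 2 * K%:R * (eta * G m) <= gamma / 35.
  move=> m.
  have h := le_trans (GF m) (FM m).
  have h2 : M%:R * Fglob x w <= M%:R * (gamma / (70 * eta * K%:R * M%:R)).
    by rewrite ler_wpM2l // ltW.
  have h3 : M%:R * (gamma / (70 * eta * K%:R * M%:R)) = gamma / (70 * eta * K%:R).
    by field; rewrite !gt_eqF.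
  have h4 : eta * G m <= eta * (gamma / (70 * eta * K%:R)).
    by apply: ler_wpM2l; [exact: ltW | rewrite -h3; exact: le_trans h h2].
  have h5 : 2 * K%:R * (eta * (gamma / (70 * eta * K%:R))) = gamma / 35.
    by field; rewrite !gt_eqF.
  by rewrite -h5 ler_wpM2l // mulr_ge0 // ltW.
have Db : forall m (k : 'I_K), enorm (local_iter (x m) eta k w - w) <= gamma / 35.
  move=> m k.
  have hB : 2 * K%:R * (eta * Gl (x m) w) <= 2^-1.
    by apply: le_trans (Gc m) _; lra.
  apply: le_trans (traj _ _ _ _ _ _ _ e0 (hx m) hB k (ltnW (ltn_ord k))) _.
  apply: le_trans (Gc m); apply: ler_wpM2r; first exact: mulr_ge0 (ltW e0) (G0 m).
  by apply: ler_wpM2l => //; rewrite ler_nat; exact: ltnW (ltn_ord k).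
have hb : enorm (bias x eta K w0 r) <= 2 * (gamma / 35) * (M%:R^-1 * \sum_m G m).
  rewrite /bias -/w enormZ ger0_norm; last by rewrite invr_ge0 mulr_ge0 // ltW.
  apply: le_trans (_ : (M%:R * K%:R)^-1 *
      (\sum_(m < M) \sum_(k < K) (2 * (gamma / 35) * G m)) <= _); last first.
    have -> : \sum_(m < M) \sum_(k < K) (2 * (gamma / 35) * G m)
        = K%:R * (2 * (gamma / 35) * \sum_(m < M) G m).
      have -> : K%:R * (2 * (gamma / 35) * \sum_(m < M) G m) = \sum_(m < M) K%:R * (2 * (gamma / 35) * G m) by rewrite !mulr_sumr.
      apply: eq_bigr => m _.
      exact: sum_const_ord.
    rewrite le_eqVlt; apply/orP; left; apply/eqP.
    by field; rewrite !gt_eqF.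
  apply: ler_wpM2l; first by rewrite invr_ge0 mulr_ge0 // ltW.
  apply: le_trans (enorm_sum _ _ _ _ _ _) _; apply: ler_sum => m _.
  apply: le_trans (enorm_sum _ _ _ _ _ _) _; apply: ler_sum => k _.
  rewrite !grad_Floc.
  have hD : enorm (local_iter (x m) eta k w - w) <= 2^-1.
    by apply: le_trans (Db m k) _; lra.
  apply: le_trans (enorm_gl_diff _ _ _ _ _ _ (hx m) hD) _.
  apply: ler_wpM2r; first exact: (G0 m).
  by apply: ler_wpM2l => //; exact: Db.
have hl : gamma * (M%:R^-1 * \sum_m G m) <= enorm (grad (Fglob x) w).
  rewrite grad_Fglob.
  set g := M%:R^-1 *: _.
  have : - dotv g ws <= enorm g.
    rewrite -dotvNl; apply: le_trans (CS _ _ _ _) _.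
    by rewrite enormN ws1 mulr1.
  apply: le_trans.
  rewrite /g dotvZl dotv_suml -mulrN -sumrN mulrCA ler_wpM2l ?invr_ge0 ?ler0n //.
  rewrite mulr_sumr; apply: ler_sum => m _.
  rewrite /gl dotvNl opprK dotvZl dotv_suml /G /Gl mulrCA ler_wpM2l ?invr_ge0 ?ler0n //.
  rewrite mulr_sumr; apply: ler_sum => i _.
  rewrite dotvZl mulrC; apply: ler_wpM2l; [exact/ltW/sg_gt0 | rewrite dotvC; exact: hws].
have Gb0 : 0 <= M%:R^-1 * \sum_m G m.
  by apply: mulr_ge0; [rewrite invr_ge0 ler0n|apply: sumr_ge0 => m _; exact: G0].
apply: le_trans hb _.
set Gb := M%:R^-1 * \sum_m G m in Gb0 hl *.
set E := enorm _ in hl *.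
nra.
Qed.
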